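(* Let $\Lambda$ be a recursive $\varepsilon$-number and let the models $\mathcal{J}$ and $\mathcal{H}$ be as in the context. For every $x\in H$ and every formula $\varphi\in\mathbb{F}$: $\mathcal{J},x\Vdash\varphi$ if and only if $\mathcal{H},x\Vdash\varphi$.
   Context: Fix a recursive ordinal $\Lambda$ that is an $\varepsilon$-number ($\omega^\Lambda=\Lambda$). Formulas: $\mathbb{F}$ is the smallest set containing $\top$, closed under $\wedge$, and such that if $\varphi\in\mathbb{F}$, $n<\omega$, $\alpha<\Lambda$ then $\langle n^\alpha\rangle\varphi\in\mathbb{F}$. The ordinal logarithm: $\ell(0)=0$, $\ell(\alpha+\omega^\beta)=\beta$. An $\ell$-sequence is an $\omega$-sequence of ordinals $x=\langle x_0,x_1,\dots\rangle$ with $x_{i+1}\le\ell(x_i)$ for all $i$. $I$ is the set of $\ell$-sequences with all entries $<\Lambda$; $H\subseteq I$ is the set of $x\in I$ with $x_j=0$ for some $j$. For $n<\omega$, $x R_n y$ (on $I$) and $x S_n y$ (on $H$) both mean: $x_m>y_m$ for all $m\le n$ and $x_i\ge y_i$ for all $i>n$. $R_n^\alpha$ on $I$: $xR_n^0y$ iff $x=y$; $xR_n^{1+\alpha}y$ iff for every $\beta<1+\alpha$ there is $z\in I$ with $xR_nz$ and $zR_n^\beta y$. $S_n^\alpha$ on $H$: same with $S_n$ and $z\in H$. The model $\mathcal{J}=\langle I,\{R_n\}\rangle$ has forcing: $x\Vdash\top$ always; $x\Vdash\varphi\wedge\psi$ iff $x\Vdash\varphi$ and $x\Vdash\psi$;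 $x\Vdash\langle n^\alpha\rangle\varphi$ iff there is $y\in I$ with $xR_n^\alpha y$ and $y\Vdash\varphi$. The model $\mathcal{H}=\langle H,\{S_n\}\rangle$ has the same clauses with $y\in H$ and $S_n^\alpha$ in place of $R_n^\alpha$. *)

(* Defs.v *)
(* Ordinals below the recursive epsilon-number Lambda are
   represented by natural numbers (codes) ordered by a computable strict
   well-order  W : nat -> nat -> bool  of order type Lambda.  Ordinal
   arithmetic (addition, omega-exponentiation, the ordinal logarithm) is
   defined order-theoretically on this well-order. *)
From Stdlib Require Import Arith.

Section Ord.
Variable W : nat -> nat -> bool.

Definition olt (a b : nat) : Prop := W a b = true.
Definition ole (a b : nat) : Prop := olt a b \/ a = b.

Definition is_wellorder : Prop :=
  (forall a, ~ olt a a) /\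
  (forall a b c, olt a b -> olt b c -> olt a c) /\
  (forall a b, olt a b \/ a = b \/ olt b a) /\
  well_founded olt.

Definition iszero (z : nat) : Prop := forall y, ~ olt y z.

Definition ordiso (A B : nat -> Prop) : Prop :=
  exists f : nat -> nat,
    (forall a, A a -> B (f a)) /\
    (forall b, B b -> exists a, A a /\ f a = b) /\
    (forall a a', A a -> A a' -> olt a a' -> olt (f a) (f a')).

(* ordinal addition:  oadd a b c  iff  a + b = c
   (c >= a and the interval [a, c) has order type b) *)
Definition oadd (a b c : nat) : Prop :=
  ole a c /\ ordiso (fun x => ole a x /\ olt x c) (fun x => olt x b).

Definition indecomp (p : nat) : Prop :=
  ~ iszero p /\ forall a, olt a p -> oadd a p p.

(* oexp b p  iff  p = omega^b  (p is the b-th additively indecomposable) *)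
Definition oexp (b p : nat) : Prop :=
  indecomp p /\ ordiso (fun q => indecomp q /\ olt q p) (fun x => olt x b).

(* ordinal logarithm:  ell g b  iff  l(g) = b,
   where l(0) = 0 and l(d + omega^b) = b *)
Definition ell (g b : nat) : Prop :=
  (iszero g /\ iszero b) \/ (exists d p, oexp b p /\ oadd d p g).

(* Lambda = order type of W is an epsilon-number (omega^Lambda = Lambda):
   equivalently Lambda is a limit and omega^b < Lambda for every b < Lambda. *)
Definition is_epsilon_order : Prop :=
  is_wellorder /\
  (forall a, exists c, olt a c) /\
  (forall b, exists p, oexp b p).

Definition seqo := nat -> nat.

Definition inI (x : seqo) : Prop :=
  forall i b, ell (x i) b -> ole (x (S i)) b.

Definition inH (x : seqo) : Prop := inI x /\ exists j, iszero (x j).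

(* x R_n y  (also used as S_n on H) *)
Definition Rn (n : nat) (x y : seqo) : Prop :=
  (forall m, m <= n -> olt (y m) (x m)) /\
  (forall i, n < i -> ole (y i) (x i)).

Inductive Rpow (D : seqo -> Prop) (R : seqo -> seqo -> Prop)
  : nat -> seqo -> seqo -> Prop :=
| Rpow_zero : forall a x y, iszero a -> (forall i, x i = y i) -> Rpow D R a x y
| Rpow_succ : forall a x y, ~ iszero a ->
    (forall b, olt b a -> exists z, D z /\ R x z /\ Rpow D R b z y) ->
    Rpow D R a x y.

End Ord.

(* formulas: top, conjunction,  <n^alpha> phi  (alpha an ordinal code < Lambda) *)
Inductive form : Type :=
| FTop : form
| FAnd : form -> form -> form
| FDia : nat -> nat -> form -> form.

Fixpoint forces (W : nat -> nat -> bool) (D : seqo -> Prop) (x : seqo) (phi : form)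
  : Prop :=
  match phi with
  | FTop => True
  | FAnd p q => forces W D x p /\ forces W D x q
  | FDia n a p =>
      exists y, D y /\ Rpow W D (Rn W n) a x y /\ forces W D y p
  end.

Definition forcesJ W x phi := forces W (inI W) x phi.
Definition forcesH W x phi := forces W (inH W) x phi.

(* Main.v *)
Require Import Defs.
From Stdlib Require Import Arith Classical.

Lemma succ_inH W n x z : inH W x -> Rn W n x z -> inI W z -> inH W z.
Proof.
  intros [_ [j Hj]] [H1 H2] Hz. split; [exact Hz|]. exists j.
  destruct (Nat.le_gt_cases j n) as [Hl|Hl].
  - exfalso. exact (Hj _ (H1 j Hl)).
  - destruct (H2 j Hl) as [Hlt|Heq].
    + exfalso. exact (Hj _ Hlt).
    + rewrite Heq. exact Hj.
Qed.

Lemma J_to_H W (HW : is_epsilon_order W) n : forall a x y,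
  Rpow W (inI W) (Rn W n) a x y -> inH W x ->
  Rpow W (inH W) (Rn W n) a x y /\ (exists j, iszero W (y j)).
Proof.
  destruct HW as [[_ [_ [_ Hwf]]] _].
  intro a. induction a as [a IH] using (well_founded_induction Hwf).
  intros x y Hr Hx. inversion Hr; subst.
  - split. + apply Rpow_zero; assumption.
    + destruct Hx as [_ [j Hj]]. exists j. rewrite <- H0. exact Hj.
  - split.
    + apply Rpow_succ; [assumption|]. intros b Hb.
      destruct (H0 b Hb) as [z [Hz [Hxz Hzy]]].
      assert (HzH : inH W z) by (eapply succ_inH; eauto).
      exists z. split; [exact HzH|]. split; [exact Hxz|].
      exact (proj1 (IH b Hb z y Hzy HzH)).
    + assert (exists b, olt W b a) as [b Hb].
      { apply NNPP. intro Hn. apply H. intros c Hc. apply Hn. exists c. exact Hc. }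
      destruct (H0 b Hb) as [z [Hz [Hxz Hzy]]].
      assert (HzH : inH W z) by (eapply succ_inH; eauto).
      exact (proj2 (IH b Hb z y Hzy HzH)).
Qed.

Lemma H_to_J W (HW : is_epsilon_order W) n : forall a x y,
  Rpow W (inH W) (Rn W n) a x y -> Rpow W (inI W) (Rn W n) a x y.
Proof.
  destruct HW as [[_ [_ [_ Hwf]]] _].
  intro a. induction a as [a IH] using (well_founded_induction Hwf).
  intros x y Hr. inversion Hr; subst.
  - apply Rpow_zero; assumption.
  - apply Rpow_succ; [assumption|]. intros b Hb.
    destruct (H0 b Hb) as [z [Hz [Hxz Hzy]]].
    exists z. split; [exact (proj1 Hz)|]. split; [exact Hxz|]. exact (IH b Hb z y Hzy).
Qed.

Theorem theorem5p1 (W : nat -> nat -> bool) (HW : is_epsilon_order W)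
  (x : seqo) (Hx : inH W x) (phi : form) :
  forcesJ W x phi <-> forcesH W x phi.
Proof.
  unfold forcesJ, forcesH. revert x Hx.
  induction phi as [|p IHp q IHq|n a p IHp]; intros x Hx; simpl.
  - tauto.
  - rewrite (IHp x Hx), (IHq x Hx). tauto.
  - split.
    + intros [y [Hy [Hr Hf]]].
      destruct (J_to_H W HW n a x y Hr Hx) as [Hr' [j Hj]].
      assert (HyH : inH W y) by (split; [exact Hy| exists j; exact Hj]).
      exists y. split; [exact HyH|]. split; [exact Hr'|]. apply (IHp y HyH). exact Hf.
    + intros [y [Hy [Hr Hf]]].
      exists y. split; [exact (proj1 Hy)|]. split; [exact (H_to_J W HW n a x y Hr)|].
      apply (IHp y Hy). exact Hf.
Qed.
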